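(* Let $G=(V,E)$ be a finite simple undirected graph, $G_0:=G$, and let $W_1,\dots,W_r$ be distinct subsets of $V$ such that for every $t\in\{1,\dots,r\}$, $W_t$ is a clique of $G_{t-1}$ with $|W_t|\ge2$ and $G_t:=G_{t-1}\mid W_t$. Let $F_0:=STAB(G)$ and $F_t:=\{x\in STAB(G)\mid x_{W_j}=1,\ j=1,\dots,t\}$. Then for every $t\in\{1,\dots,r\}$, the inequality $x_{W_t}\le1$ is valid for $F_{t-1}$.
   Context: For a graph $G=(V,E)$, $\mathcal S(G)\subseteq\{0,1\}^V$ is the set of characteristic vectors of stable sets of $G$, and $STAB(G)=\mathrm{conv}\,\mathcal S(G)$. For $W\subseteq V$ and $x\in\mathbb R^V$, $x_W=\sum_{v\in W}x_v$. The clique projection of a clique $W$ ($|W|\ge2$) of a graph $H=(V,E_H)$ is $H\mid W=(V,E_H\cup\{uv\notin E_H\mid u\ne v,\ W\subseteq N_H(u)\cup N_H(v)\})$, where $N_H(u)$ is the neighborhood of $u$ in $H$. *)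

(* Defs.v *)
From mathcomp Require Import all_boot all_order all_algebra.
Set Implicit Arguments. Unset Strict Implicit. Unset Printing Implicit Defensive.
Import Order.TTheory GRing.Theory Num.Theory.
Local Open Scope ring_scope.

Definition simple_graph (V : finType) (e : rel V) : Prop :=
  symmetric e /\ irreflexive e.

Definition nbhd (V : finType) (e : rel V) (u : V) : {set V} := [set w | e u w].

Definition is_clique (V : finType) (e : rel V) (W : {set V}) : bool :=
  [forall u in W, forall v in W, (u != v) ==> e u v].

Definition is_stable (V : finType) (e : rel V) (S : {set V}) : bool :=
  [forall u in S, forall v in S, ~~ e u v].

Definition clique_proj (V : finType) (e : rel V) (W : {set V}) : rel V :=
  fun u v => e u v || ((u != v) && (W \subset nbhd e u :|: nbhd e v)).

(* G_i := (...((G | W_1) | W_2) ... | W_i), Ws = [:: W_1; ...; W_r]. *)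
Definition proj_seq (V : finType) (e : rel V) (Ws : seq {set V}) (i : nat) : rel V :=
  foldl (@clique_proj V) e (take i Ws).

Definition chi (R : ringType) (V : finType) (S : {set V}) : V -> R :=
  fun v => (v \in S)%:R.

Definition xsum (R : ringType) (V : finType) (x : V -> R) (W : {set V}) : R :=
  \sum_(v in W) x v.

Definition STAB (R : realFieldType) (V : finType) (e : rel V) (x : V -> R) : Prop :=
  exists lam : {set V} -> R,
    [/\ forall S, 0 <= lam S,
        forall S, ~~ is_stable e S -> lam S = 0,
        \sum_(S : {set V}) lam S = 1 &
        forall v, x v = \sum_(S : {set V}) lam S * chi R S v].

(* Main.v *)
Require Import Defs.
From mathcomp Require Import all_boot all_order all_algebra.
Import Order.TTheory GRing.Theory Num.Theory.
Local Open Scope ring_scope.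

Lemma card_stab_clique (V : finType) (e : rel V) (W S : {set V}) :
  is_clique e W -> is_stable e S -> (#|S :&: W| <= 1)%N.
Proof.
move=> cl st; apply/card_le1_eqP => u v; rewrite !inE => /andP[uS uW] /andP[vS vW].
apply/eqP; apply/negPn/negP => neq; rewrite eq_sym in neq.
move/forallP: cl => /(_ u) /implyP /(_ uW) /forallP /(_ v) /implyP /(_ vW) /implyP /(_ neq) euv.
move/forallP: st => /(_ u) /implyP /(_ uS) /forallP /(_ v) /implyP /(_ vS).
by rewrite euv.
Qed.

Lemma xsum_lam (R : realFieldType) (V : finType) (x : V -> R) (lam : {set V} -> R) W :
  (forall v, x v = \sum_(S : {set V}) lam S * chi R S v) ->
  xsum x W = \sum_(S : {set V}) lam S * (#|S :&: W|)%:R.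
Proof.
move=> Hx; rewrite /xsum.
under eq_bigr do rewrite Hx.
rewrite exchange_big /=; apply: eq_bigr => S _.
rewrite -mulr_sumr; congr (_ * _).
rewrite /chi -natr_sum; congr (_%:R).
rewrite -sum1_card big_mkcond /= [RHS]big_mkcond /=.
apply: eq_bigr => v _; rewrite !inE.
by case: (v \in S); case: (v \in W).
Qed.

Lemma stable_proj (V : finType) (e : rel V) (W S : {set V}) :
  is_stable e S -> #|S :&: W| = 1%N -> is_stable (clique_proj e W) S.
Proof.
move=> st /eqP /cards1P [w Hw].
have : w \in S :&: W by rewrite Hw set11.
rewrite inE => /andP[wS wW].
have nst : forall a b, a \in S -> b \in S -> e a b = false.
  move=> a b aS bS; move/forallP: st => /(_ a) /implyP /(_ aS) /forallP /(_ b) /implyP /(_ bS).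
  by move/negbTE.
apply/forallP => u; apply/implyP => uS; apply/forallP => v; apply/implyP => vS.
rewrite /clique_proj nst //= negb_and; apply/orP; right.
apply/negP => /subsetP /(_ w wW); rewrite !inE.
by rewrite !nst.
Qed.

(* Ws = [:: W_1; ...; W_r]; W_{i+1} = nth set0 Ws i; G_i = proj_seq e Ws i. *)
Theorem corollary1 (R : realFieldType) (V : finType) (e : rel V)
    (Ws : seq {set V}) :
  simple_graph e ->
  uniq Ws ->
  (forall i, (i < size Ws)%N ->
     is_clique (proj_seq e Ws i) (nth set0 Ws i) /\ (2 <= #|nth set0 Ws i|)%N) ->
  forall i, (i < size Ws)%N ->
  forall x : V -> R,
    STAB e x ->
    (forall j, (j < i)%N -> xsum x (nth set0 Ws j) = 1) ->
    xsum x (nth set0 Ws i) <= 1.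
Proof.
move=> _ _ Hcl i ilt x [lam [lam0 lamst lam1 Hx]] Hj.
have key : forall j, (j <= i)%N -> forall S, lam S != 0 -> is_stable (proj_seq e Ws j) S.
  elim=> [|j IH] ji S lS.
    rewrite /proj_seq take0 /=.
    by apply: contraNT lS => /lamst ->.
  have jlt : (j < i)%N by [].
  have js : (j < size Ws)%N by apply: ltn_trans jlt ilt.
  rewrite /proj_seq (take_nth set0 js) foldl_rcons -/(proj_seq e Ws j).
  have stj := IH (ltnW ji).
  set W := nth set0 Ws j.
  have le1 : forall S', lam S' != 0 -> (#|S' :&: W| <= 1)%N.
    by move=> S' lS'; apply: card_stab_clique (Hcl j js).1 (stj S' lS').
  have HW := Hj j jlt; rewrite (xsum_lam _ _ _ _ _ Hx) in HW.
  have H0 : \sum_(S' : {set V}) lam S' * (1 - (#|S' :&: W|)%:R) = 0.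
    under eq_bigr do rewrite mulrBr mulr1.
    by rewrite sumrB lam1 HW subrr.
  have nn : forall S', true -> 0 <= lam S' * (1 - (#|S' :&: W|)%:R).
    move=> S' _; have [->|lS'] := eqVneq (lam S') 0; first by rewrite mul0r.
    by rewrite mulr_ge0 // subr_ge0 lern1 le1.
  have /eqP := psumr_eq0P nn H0 (i := S) isT.
  rewrite mulf_eq0 (negbTE lS) /= subr_eq0 eq_sym pnatr_eq1.
  by move/eqP=> c1; apply: stable_proj (stj S lS) c1.
rewrite (xsum_lam _ _ _ _ _ Hx) -[X in _ <= X]lam1; apply: ler_sum => S _.
have [->|lS] := eqVneq (lam S) 0; first by rewrite !mul0r.
rewrite -[X in _ <= X]mulr1; apply: ler_wpM2l => //.
by rewrite /= lern1 (card_stab_clique _ _ _ _ (Hcl i ilt).1 (key i (leqnn i) S lS)).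
Qed.
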